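(* Let $\mathbf{m}$ be diagonal with strictly positive diagonal, fix a realization of $\mathbf{R}$, and let $\hat b=(\mathbf{x}'\mathbf{m}\mathbf{R}\mathbf{x})^{+}\mathbf{x}'\mathbf{m}\mathbf{R}y$. Define the missing imputed estimator $\hat\mu^{MI}=\frac1n\mathbf{1}'\big(I_{kn}-(\mathbf{R}-I_{kn})\mathbf{x}(\mathbf{x}'\mathbf{m}\mathbf{R}\mathbf{x})^{+}\mathbf{x}'\mathbf{m}\big)\mathbf{R}y$ and the generalized regression estimator $\hat\mu^{GR}=\frac1n\mathbf{1}'\pi^{-1}\mathbf{R}y-\big(\frac1n\mathbf{1}'\pi^{-1}\mathbf{R}-\frac1n\mathbf{1}'\big)\mathbf{x}\hat b$. If there exists $\mathbf{t}\in\mathbb{R}^{(k+p)\times k}$ with $\mathbf{R}\mathbf{m}\mathbf{x}\mathbf{t}=\mathbf{R}(I_{kn}-\pi^{-1})\mathbf{1}$, then $\hat\mu^{MI}=\hat\mu^{GR}$.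
   Context: $k$ arms, $n$ units, $p$ covariates. $y\in\mathbb{R}^{kn}$ stacks potential outcomes of the $k$ arms. $\mathbf{R}$ is the $kn\times kn$ diagonal matrix of assignment indicators (ordered arm by arm), $\pi=\mathrm{E}[\mathbf{R}]$ with entries in $(0,1)$. $\mathbf{1}=I_k\otimes1_n$; $\mathbf{x}=[\mathbf{1}\mid1_k\otimes X]$ for a covariate matrix $X\in\mathbb{R}^{n\times p}$; $A^+$ is the Moore–Penrose inverse. *)

(* Defs.v *)
From HB Require Import structures.
From mathcomp Require Import all_boot all_order all_algebra.
Set Implicit Arguments. Unset Strict Implicit. Unset Printing Implicit Defensive.
Import Order.TTheory GRing.Theory Num.Theory.
Local Open Scope ring_scope.

(* Indices of R^{kn}: index (a, u) (arm a, unit u) is mxvec_index a u = a*n + u,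
   i.e. ordered arm by arm. *)

(* Moore--Penrose inverse (over a real field the adjoint is the transpose):
   B is the Moore--Penrose inverse of A iff the four Penrose equations hold. *)
Definition is_MP_inverse (F : realFieldType) (r c : nat)
  (A : 'M[F]_(r, c)) (B : 'M[F]_(c, r)) : Prop :=
  [/\ A *m B *m A = A, B *m A *m B = B,
      (A *m B)^T = A *m B & (B *m A)^T = B *m A].

(* bold 1 = I_k (x) 1_n : a (k n) x k matrix *)
Definition bone (F : ringType) (k n : nat) : 'M[F]_(k * n, k) :=
  \matrix_(i, c) (mxvec (\matrix_(a < k, u < n) ((a == c)%:R : F))) 0 i.

(* 1_k (x) X : a (k n) x p matrix *)
Definition kronX (F : ringType) (k n p : nat) (X : 'M[F]_(n, p)) : 'M[F]_(k * n, p) :=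
  \matrix_(i, j) (mxvec (\matrix_(a < k, u < n) X u j)) 0 i.

Definition bigx (F : ringType) (k n p : nat) (X : 'M[F]_(n, p)) : 'M[F]_(k * n, k + p) :=
  row_mx (bone F k n) (kronX k X).

(* Main.v *)
Require Import Defs.
From HB Require Import structures.
From mathcomp Require Import all_boot all_order all_algebra.
Import Order.TTheory GRing.Theory Num.Theory.
Local Open Scope ring_scope.

Lemma zl (V : zmodType) (a b c d e : V) :
  a - d - (b - e) = 0 -> a - (b - c) = d - (e - c).
Proof.
move=> h; rewrite !opprB !addrA (addrAC a c) (addrAC d c); congr (_ + _).
apply/eqP; rewrite -subr_eq0 -h; apply/eqP.
rewrite !opprB !addrA (addrAC a (-b)) (addrAC (a - d)).
by rewrite (addrAC a e) (addrAC (a - b) e) (addrAC a (-d)).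
Qed.

Lemma key (F : realFieldType) r c (A : 'M[F]_(r, c)) (w : 'rV[F]_r) (P : 'M[F]_(c, c)) :
  (forall i, 0 <= w 0 i) ->
  (A^T *m diag_mx w *m A) *m P *m (A^T *m diag_mx w *m A) = A^T *m diag_mx w *m A ->
  (A^T *m diag_mx w *m A) *m P *m (A^T *m diag_mx w) = A^T *m diag_mx w.
Proof.
move=> w0; set M := A^T *m diag_mx w *m A => hM.
set G := A^T - M *m P *m A^T.
have h1 : G *m diag_mx w *m A = 0.
  have e : M *m P *m A^T *m diag_mx w *m A = M *m P *m M by rewrite /M !mulmxA.
  by rewrite /G !mulmxBl e hM subrr.
have h2 : G *m diag_mx w *m G^T = 0.
  rewrite /G linearB /= trmxK !trmx_mul trmxK -/G mulmxBr.
  by rewrite !mulmxA h1 !mul0mx subrr.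
have hG : A^T - M *m P *m A^T = G by [].
clearbody G.
have h3 : G *m diag_mx w = 0.
  apply/matrixP => j i; rewrite mul_mx_diag !mxE.
  have := congr1 (fun N : 'M[F]_c => N j j) h2; rewrite !mxE => hs.
  have hnn : forall l, true -> 0 <= (G *m diag_mx w) j l * G^T l j.
    move=> l _; rewrite mul_mx_diag !mxE mulrAC -expr2; apply: mulr_ge0; [exact: sqr_ge0 | exact: w0].
  have hz := psumr_eq0P hnn hs (i:=i) isT.
  move: hz; rewrite mul_mx_diag !mxE => hz.
  have : (G j i * w 0 i) * (G j i * w 0 i) == 0.
    by rewrite mulrA hz mul0r.
  by rewrite mulf_eq0 orbb => /eqP.
apply/eqP; rewrite -subr_eq0 -opprB oppr_eq0; apply/eqP.
by rewrite -h3 -hG mulmxBl mulmxA.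
Qed.

Theorem mainTheorem9 (F : realFieldType) (k n p : nat)
  (X : 'M[F]_(n, p)) (y : 'cV[F]_(k * n))
  (Rv piv mv : 'rV[F]_(k * n))
  (HR01 : forall i, Rv 0 i = 0 \/ Rv 0 i = 1)
  (HRone : forall u : 'I_n, \sum_(a < k) Rv 0 (mxvec_index a u) = 1)
  (Hpi : forall i, 0 < piv 0 i < 1)
  (Hm : forall i, 0 < mv 0 i)
  (Pinv : 'M[F]_(k + p, k + p))
  (HPinv : is_MP_inverse
             ((bigx k X)^T *m diag_mx mv *m diag_mx Rv *m bigx k X) Pinv)
  (t : 'M[F]_(k + p, k))
  (Ht : diag_mx Rv *m diag_mx mv *m bigx k X *m t
        = diag_mx Rv *m (1%:M - invmx (diag_mx piv)) *m bone F k n) :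
  let Rm := diag_mx Rv in
  let mm := diag_mx mv in
  let pim1 := invmx (diag_mx piv) in
  let x := bigx k X in
  let one := bone F k n in
  let bhat := Pinv *m x^T *m mm *m Rm *m y in
  let muMI := n%:R^-1 *: (one^T *m (1%:M - (Rm - 1%:M) *m x *m Pinv *m x^T *m mm)
                               *m Rm *m y) in
  let muGR := n%:R^-1 *: (one^T *m pim1 *m Rm *m y)
              - (n%:R^-1 *: (one^T *m pim1 *m Rm) - n%:R^-1 *: one^T) *m x *m bhat in
  muMI = muGR.
Proof.
move=> Rm mm pim1 x one bhat muMI muGR.
set w : 'rV[F]_(k * n) := \row_i (mv 0 i * Rv 0 i).
have hW : mm *m Rm = diag_mx w.
  apply/matrixP => i j; rewrite /mm /Rm mul_mx_diag !mxE.
  by case: eqP => [->|_]; rewrite ?mulr1n ?mulr0n ?mul0r.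
have w0 : forall i, 0 <= w 0 i.
  move=> i; rewrite mxE; case: (HR01 i) => ->; rewrite ?mulr0 ?mulr1 //.
  exact: ltW.
case: HPinv => hP _ _ _.
have hM : (x^T *m diag_mx w *m x) *m Pinv *m (x^T *m diag_mx w *m x) = x^T *m diag_mx w *m x.
  by rewrite -hW !mulmxA; rewrite !mulmxA in hP.
have hK := @key _ _ _ x w Pinv w0 hM.
set z := x^T *m mm *m Rm *m y.
have hMz : (x^T *m mm *m Rm *m x) *m Pinv *m z = z.
  have e : x^T *m mm *m Rm = x^T *m diag_mx w by rewrite -mulmxA hW.
  by rewrite /z e mulmxA hK.
set u := x *m (Pinv *m z).
have hT : one^T *m (1%:M - pim1) *m Rm = t^T *m x^T *m mm *m Rm.
  have := congr1 trmx Ht; rewrite !trmx_mul !tr_diag_mx linearB /= trmx_inv.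
  rewrite tr_diag_mx !trmx1 => e.
  by rewrite -!mulmxA e.
rewrite /muMI /muGR /bhat -scalerBr -!scalemxAl -scalerBr; congr (_ *: _).
have hy : one^T *m (1%:M - pim1) *m Rm *m y = t^T *m z by rewrite hT /z !mulmxA.
have hu : one^T *m (1%:M - pim1) *m Rm *m u = t^T *m z.
  by rewrite hT -hMz /u /z !mulmxA.
have : one^T *m (1%:M - pim1) *m Rm *m y - one^T *m (1%:M - pim1) *m Rm *m u = 0.
  by rewrite hy hu subrr.
rewrite /u /z !mulmxBr !mulmxBl ?mulmx1 ?mul1mx !mulmxA => H.
rewrite !mulmxBr !mulmxBl ?mulmx1 ?mul1mx !mulmxA.
exact: zl H.
Qed.
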